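(* Let $G\subseteq\ell^2$ be a dense $G_\delta$ set and $f:G\to\{1,2\}^\omega$ a continuous function such that $y\notin\mathsf{HC}(f(y))$ for each $y\in G$, $\mathsf{HC}(f(y))\neq\emptyset$ for each $y\in G$, and for each nonempty open $U\subseteq\ell^2$ the image $f[U\cap G]$ contains at least two elements. Then there is a perfect set $P\subseteq G$ (a closed subset of $\ell^2$ with no isolated points) such that $x\notin\mathsf{HC}(f(x))$ for all $x\in P$, and $x\in\mathsf{HC}(f(y))$ for all distinct $x,y\in P$.
   Context: $\omega=\{0,1,2,\dots\}$; $\ell^2$ is the Hilbert space of square-summable real sequences indexed by $\omega$ with its norm topology; $\{1,2\}^\omega$ has the product topology. For $w\in\{1,2\}^\omega$, $B_w:\ell^2\to\ell^2$ is $B_w(x)(i)=w(i)\,x(i+1)$, and $\mathsf{HC}(w)$ is the set of $x\in\ell^2$ such that $\{B_w^k(x):k\in\omega\}$ is dense in $\ell^2$. *)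

(* Defs.v *)
From Stdlib Require Import Reals.
From Coquelicot Require Import Coquelicot.
Open Scope R_scope.

Definition seqR := nat -> R.

Definition in_l2 (x : seqR) : Prop := ex_series (fun i => (x i) ^ 2).

(* the l^2 norm distance (meaningful for x, y in l^2) *)
Definition l2dist (x y : seqR) : R := sqrt (Series (fun i => (x i - y i) ^ 2)).

(* Subsets of l^2 are predicates on sequences contained in in_l2. *)
Definition l2_open (U : seqR -> Prop) : Prop :=
  (forall x, U x -> in_l2 x) /\
  forall x, U x -> exists eps, 0 < eps /\
    forall y, in_l2 y -> l2dist x y < eps -> U y.

Definition l2_dense (D : seqR -> Prop) : Prop :=
  (forall x, D x -> in_l2 x) /\
  forall x eps, in_l2 x -> 0 < eps -> exists y, D y /\ l2dist x y < eps.

Definition l2_Gdelta (G : seqR -> Prop) : Prop :=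
  exists Us : nat -> seqR -> Prop,
    (forall n, l2_open (Us n)) /\ forall x, G x <-> (forall n, Us n x).

Definition l2_closed (P : seqR -> Prop) : Prop :=
  (forall x, P x -> in_l2 x) /\
  forall x, in_l2 x ->
    (forall eps, 0 < eps -> exists y, P y /\ l2dist x y < eps) -> P x.

Definition l2_perfect (P : seqR -> Prop) : Prop :=
  l2_closed P /\ (exists p, P p) /\
  forall x, P x -> forall eps, 0 < eps ->
    exists y, P y /\ y <> x /\ l2dist x y < eps.

(* {1,2}^omega, coded by bool: false ~ 1, true ~ 2 *)
Definition weight := nat -> bool.
Definition wval (b : bool) : R := if b then 2 else 1.

Definition Bw (w : weight) (x : seqR) : seqR := fun i => wval (w i) * x (S i).

Definition HC (w : weight) (x : seqR) : Prop :=
  in_l2 x /\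
  forall z eps, in_l2 z -> 0 < eps ->
    exists k : nat, l2dist (Nat.iter k (Bw w) x) z < eps.

(* continuity of f : G -> {1,2}^omega (product of discrete spaces):
   each coordinate is locally constant on G *)
Definition cont_on (G : seqR -> Prop) (f : seqR -> weight) : Prop :=
  forall y, G y -> forall n : nat, exists eps, 0 < eps /\
    forall z, G z -> l2dist y z < eps -> f z n = f y n.

(* Main.v *)
Require Import Defs.
From Stdlib Require Import Reals Lra Lia Arith ZArith List Bool FunctionalExtensionality Classical ClassicalEpsilon.
From Coquelicot Require Import Coquelicot.
Open Scope R_scope.

Fixpoint psum (u : nat -> R) (n : nat) : R :=
  match n with O => 0 | S k => psum u k + u k end.

Lemma sum_n_psum u n : sum_n u n = psum u (S n).
Proof.
  induction n.
  - rewrite sum_O. simpl. lra.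
  - rewrite sum_Sn. change (plus (sum_n u n) (u (S n))) with (sum_n u n + u (S n)).
    rewrite IHn. simpl. lra.
Qed.

Lemma psum_nonneg u n : (forall i, 0 <= u i) -> 0 <= psum u n.
Proof. intros H; induction n; simpl; [lra| specialize (H n); lra]. Qed.

Lemma psum_mono u n m : (forall i, 0 <= u i) -> (n <= m)%nat -> psum u n <= psum u m.
Proof.
  intros H Hnm; induction Hnm; [lra|]. simpl. specialize (H m); lra.
Qed.

Lemma psum_le u v n : (forall i, u i <= v i) -> psum u n <= psum v n.
Proof. intros H; induction n; simpl; [lra| specialize (H n); lra]. Qed.

Lemma psum_ext u v n : (forall i, u i = v i) -> psum u n = psum v n.
Proof. intros H; induction n; simpl; [lra| rewrite H; lra]. Qed.

Lemma psum_scal c u n : psum (fun i => c * u i) n = c * psum u n.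
Proof. induction n; simpl; [lra| rewrite IHn; lra]. Qed.

Lemma psum_plus u v n : psum (fun i => u i + v i) n = psum u n + psum v n.
Proof. induction n; simpl; [lra| rewrite IHn; lra]. Qed.

Lemma psum_add u a b : psum u (a + b) = psum u a + psum (fun i => u (a + i)%nat) b.
Proof.
  induction b; simpl.
  - rewrite Nat.add_0_r. lra.
  - rewrite Nat.add_succ_r. simpl. rewrite IHb. lra.
Qed.

Lemma psum_support u N n : (forall i, 0 <= u i) -> (forall i, (N <= i)%nat -> u i = 0) ->
  psum u n <= psum u N.
Proof.
  intros H0 H. induction n.
  - simpl. apply psum_nonneg; auto.
  - simpl. destruct (le_lt_dec N n).
    + rewrite (H n l). lra.
    + apply Rle_trans with (psum u (S n)); [simpl; lra|]. apply psum_mono; auto.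
Qed.

Lemma psum_const_bound u N C : (forall i, u i <= C) -> psum u N <= INR N * C.
Proof.
  intros H; induction N; simpl psum; [simpl; lra|]. rewrite S_INR. specialize (H N). lra.
Qed.

Lemma series_bound u C : (forall i, 0 <= u i) -> (forall n, psum u n <= C) ->
  ex_series u /\ Series u <= C.
Proof.
  intros H0 HC.
  assert (Hinc: forall n, sum_n u n <= sum_n u (S n)).
  { intros n. rewrite !sum_n_psum. apply psum_mono; auto. }
  assert (Hb: forall n, sum_n u n <= C). { intros n; rewrite sum_n_psum; auto. }
  destruct (ex_finite_lim_seq_incr _ C Hinc Hb) as [l Hl].
  assert (Hs: is_series u l) by exact Hl.
  split. exists l; exact Hs.
  rewrite (is_series_unique _ _ Hs).
  assert (HH := is_lim_seq_le _ _ _ _ Hb Hl (is_lim_seq_const C)). simpl in HH. exact HH.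
Qed.

Lemma psum_le_Series u n : (forall i, 0 <= u i) -> ex_series u -> psum u n <= Series u.
Proof.
  intros H0 [l Hl]. rewrite (is_series_unique _ _ Hl).
  assert (Hl' : is_lim_seq (sum_n u) l) by exact Hl.
  assert (HH := is_lim_seq_le_loc (fun _ => psum u n) (sum_n u) (psum u n) l).
  simpl in HH. apply HH; [| apply is_lim_seq_const | exact Hl'].
  exists n. intros m Hm. rewrite sum_n_psum. apply psum_mono; auto.
Qed.

Lemma Series_nonneg u : (forall i, 0 <= u i) -> 0 <= Series u.
Proof.
  intros H. destruct (classic (ex_series u)) as [He|He].
  - apply Rle_trans with (psum u 0). simpl; lra. apply psum_le_Series; auto.
  - unfold Series. 
    assert (Lim_seq (sum_n u) = Lim_seq (sum_n u)) by reflexivity.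
    destruct (ex_lim_seq_incr (sum_n u)) as [l Hl].
    { intros n. rewrite !sum_n_psum. apply psum_mono; auto. }
    rewrite (is_lim_seq_unique _ _ Hl).
    destruct l as [l| |]; simpl; try lra.
    exfalso; apply He. exists l. exact Hl.
Qed.

Lemma sqrt_le_sq C s : 0 <= C -> sqrt C <= s -> C <= s ^ 2.
Proof.
  intros H1 H2. rewrite <- (sqrt_sqrt C H1). replace (sqrt C * sqrt C) with (sqrt C ^ 2) by ring.
  apply pow_incr. split; [apply sqrt_pos| exact H2].
Qed.

Lemma sq_le_sqrt C s : 0 <= s -> C <= s ^ 2 -> sqrt C <= s.
Proof.
  intros H1 H2. rewrite <- (sqrt_pow2 s H1). apply sqrt_le_1_alt. exact H2.
Qed.
Definition D (x y : seqR) : nat -> R := fun i => (x i - y i) ^ 2.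
Definition z0 : seqR := fun _ => 0.

Lemma D_nonneg x y i : 0 <= D x y i.
Proof. unfold D. apply pow2_ge_0. Qed.

Lemma l2_lin a b x y : in_l2 x -> in_l2 y -> in_l2 (fun i => a * x i + b * y i).
Proof.
  intros Hx Hy. unfold in_l2 in *.
  assert (H := series_bound (fun i => (a * x i + b * y i) ^ 2)
     (2 * a^2 * Series (fun i => x i ^2) + 2 * b^2 * Series (fun i => y i ^ 2))).
  apply H.
  - intros; apply pow2_ge_0.
  - intros n. apply Rle_trans with (psum (fun i => 2 * a^2 * (x i ^2) + 2 * b^2 * (y i ^ 2)) n).
    + apply psum_le. intros i. pose proof (pow2_ge_0 (a * x i - b * y i)). nra.
    + rewrite psum_plus, !psum_scal.
      assert (psum (fun i => x i ^2) n <= Series (fun i => x i ^ 2)) by (apply psum_le_Series; auto; intros; apply pow2_ge_0).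
      assert (psum (fun i => y i ^2) n <= Series (fun i => y i ^ 2)) by (apply psum_le_Series; auto; intros; apply pow2_ge_0).
      assert (0 <= a^2) by apply pow2_ge_0. assert (0 <= b^2) by apply pow2_ge_0. nra.
Qed.

Lemma l2_ext x y : (forall i, x i = y i) -> in_l2 x -> in_l2 y.
Proof. intros H Hx. unfold in_l2 in *. apply (ex_series_ext (fun i => x i ^ 2)); [intros n; rewrite H; reflexivity| exact Hx]. Qed.

Lemma l2_plus x y : in_l2 x -> in_l2 y -> in_l2 (fun i => x i + y i).
Proof. intros. eapply l2_ext; [|apply (l2_lin 1 1 x y); auto]. intros; simpl; ring. Qed.

Lemma l2_minus x y : in_l2 x -> in_l2 y -> in_l2 (fun i => x i - y i).
Proof. intros. eapply l2_ext; [|apply (l2_lin 1 (-1) x y); auto]. intros; simpl; ring. Qed.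

Lemma l2_z0 : in_l2 z0.
Proof. apply (series_bound _ 0); intros; unfold z0; simpl; [lra|]. 
  rewrite (psum_ext _ (fun _ => 0 * 0)); [rewrite psum_scal; lra| intros; ring]. Qed.

Lemma l2_D x y : in_l2 x -> in_l2 y -> ex_series (D x y).
Proof. intros. assert (H1 := l2_minus x y H H0). exact H1. Qed.

Lemma dist_sq x y : in_l2 x -> in_l2 y -> l2dist x y ^ 2 = Series (D x y).
Proof.
  intros. unfold l2dist. simpl. rewrite Rmult_1_r. apply sqrt_sqrt.
  apply Series_nonneg. intros; apply D_nonneg.
Qed.

Lemma dist_nonneg x y : 0 <= l2dist x y.
Proof. apply sqrt_pos. Qed.

Lemma dist_sym x y : l2dist x y = l2dist y x.
Proof. unfold l2dist. f_equal. apply Series_ext. intros; ring. Qed.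

Lemma psum_le_dist2 x y n : in_l2 x -> in_l2 y -> psum (D x y) n <= l2dist x y ^ 2.
Proof.
  intros. rewrite dist_sq; auto. apply psum_le_Series. apply D_nonneg. apply l2_D; auto.
Qed.

Lemma dist_bound x y C : 0 <= C -> (forall n, psum (D x y) n <= C ^ 2) -> l2dist x y <= C.
Proof.
  intros HC H. destruct (series_bound (D x y) (C^2) (D_nonneg x y) H) as [_ H2].
  unfold l2dist. rewrite <- (sqrt_pow2 C HC). apply sqrt_le_1_alt. exact H2.
Qed.

Lemma dist_self x : l2dist x x = 0.
Proof.
  apply Rle_antisym; [|apply dist_nonneg]. apply dist_bound; [lra|].
  intros n. rewrite (psum_ext _ (fun _ => 0 * 0)); [rewrite psum_scal; lra| intros; unfold D; ring].
Qed.

Lemma dist_coord x y i : in_l2 x -> in_l2 y -> Rabs (x i - y i) <= l2dist x y.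
Proof.
  intros. assert (H1 := psum_le_dist2 x y (S i) H H0).
  assert (H2 : psum (D x y) i >= 0) by (apply Rle_ge, psum_nonneg, D_nonneg).
  simpl in H1. unfold D at 2 in H1.
  assert (H3: (x i - y i)^2 <= l2dist x y ^ 2) by lra.
  assert (H4 := dist_nonneg x y).
  rewrite <- (sqrt_pow2 (l2dist x y) H4). rewrite <- sqrt_Rsqr_abs. apply sqrt_le_1_alt.
  unfold Rsqr. simpl in H3. lra.
Qed.

Lemma dist_eq0 x y : in_l2 x -> in_l2 y -> l2dist x y = 0 -> x = y.
Proof.
  intros. apply functional_extensionality. intros i.
  assert (H2 := dist_coord x y i H H0). rewrite H1 in H2.
  assert (H3 := Rabs_pos (x i - y i)). assert (Rabs (x i - y i) = 0) by lra.
  apply Rabs_eq_0 in H4. lra.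
Qed.

Lemma mink2 p q a b : 0 <= p -> 0 <= q ->
  sqrt ((p + q)^2 + (a+b)^2) <= sqrt (p^2 + a^2) + sqrt (q^2 + b^2).
Proof.
  intros Hp Hq.
  set (s := sqrt (p^2 + a^2)). set (t := sqrt (q^2+b^2)).
  assert (Hs: 0 <= s) by apply sqrt_pos. assert (Ht: 0 <= t) by apply sqrt_pos.
  pose proof (pow2_ge_0 p). pose proof (pow2_ge_0 q). pose proof (pow2_ge_0 a). pose proof (pow2_ge_0 b).
  assert (Hs2: s * s = p^2 + a^2) by (apply sqrt_sqrt; lra).
  assert (Ht2: t * t = q^2 + b^2) by (apply sqrt_sqrt; lra).
  rewrite <- (sqrt_pow2 (s + t)) by lra. apply sqrt_le_1_alt.
  assert (p*q + a*b <= s * t).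
  { assert ((p*q+a*b)^2 <= (s*t)^2) by (replace ((s*t)^2) with ((s*s)*(t*t)) by ring; rewrite Hs2, Ht2; pose proof (pow2_ge_0 (p*b - q*a)); nra).
    assert (0 <= s * t) by (apply Rmult_le_pos; auto).
    destruct (Rle_dec (p*q+a*b) (s*t)) as [?|Hn]; auto. apply Rnot_le_lt in Hn. nra. }
  nra.
Qed.

Lemma mink_finite (a b : nat -> R) n :
  sqrt (psum (fun i => (a i + b i)^2) n) <= sqrt (psum (fun i => a i ^ 2) n) + sqrt (psum (fun i => b i ^2) n).
Proof.
  induction n; cbn [psum].
  - rewrite sqrt_0. lra.
  - set (A := psum (fun i => a i ^ 2) n) in *. set (B := psum (fun i => b i ^ 2) n) in *.
    set (C := psum (fun i => (a i + b i) ^ 2) n) in *.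
    assert (HA: 0 <= A) by (apply psum_nonneg; intros; apply pow2_ge_0).
    assert (HB: 0 <= B) by (apply psum_nonneg; intros; apply pow2_ge_0).
    assert (HC: 0 <= C) by (apply psum_nonneg; intros; apply pow2_ge_0).
    assert (HA2 := sqrt_sqrt A HA). assert (HB2 := sqrt_sqrt B HB). assert (HC2 := sqrt_sqrt C HC).
    assert (H1 := mink2 (sqrt A) (sqrt B) (a n) (b n) (sqrt_pos A) (sqrt_pos B)).
    assert (EA: sqrt A ^ 2 = A) by (simpl; lra). assert (EB: sqrt B ^ 2 = B) by (simpl; lra).
    rewrite EA, EB in H1.
    eapply Rle_trans; [|exact H1].
    apply sqrt_le_1_alt.
    assert (C <= (sqrt A + sqrt B)^2).
    { apply sqrt_le_sq; auto. }
    lra.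
Qed.

Lemma dist_tri x y z : in_l2 x -> in_l2 y -> in_l2 z ->
  l2dist x z <= l2dist x y + l2dist y z.
Proof.
  intros Hx Hy Hz. apply dist_bound.
  - assert (H1 := dist_nonneg x y); assert (H2 := dist_nonneg y z); lra.
  - intros n.
    assert (H := mink_finite (fun i => x i - y i) (fun i => y i - z i) n).
    assert (E: psum (D x z) n = psum (fun i => ((x i - y i) + (y i - z i))^2) n)
      by (apply psum_ext; intros; unfold D; ring).
    rewrite E.
    assert (H1: sqrt (psum (fun i => (x i - y i)^2) n) <= l2dist x y).
    { rewrite <- (sqrt_pow2 (l2dist x y)) by apply dist_nonneg. apply sqrt_le_1_alt.
      apply (psum_le_dist2 x y n Hx Hy). }
    assert (H2: sqrt (psum (fun i => (y i - z i)^2) n) <= l2dist y z).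
    { rewrite <- (sqrt_pow2 (l2dist y z)) by apply dist_nonneg. apply sqrt_le_1_alt.
      apply (psum_le_dist2 y z n Hy Hz). }
    apply sqrt_le_sq. apply psum_nonneg; intros; apply pow2_ge_0. lra.
Qed.

Lemma psum_shift u n : psum u (S n) = u O + psum (fun i => u (S i)) n.
Proof. induction n; cbn [psum] in *; [lra|]. rewrite IHn. lra. Qed.

Lemma wval_bounds b : 1 <= wval b <= 2.
Proof. destruct b; simpl; lra. Qed.

Lemma Bw_psum w x y n : psum (D (Bw w x) (Bw w y)) n <= 4 * psum (D x y) (S n).
Proof.
  rewrite psum_shift.
  assert (0 <= D x y 0) by apply D_nonneg.
  assert (psum (D (Bw w x) (Bw w y)) n <= psum (fun i => 4 * D x y (S i)) n).
  { apply psum_le. intros i. unfold D, Bw. 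
    assert (Hw := wval_bounds (w i)). pose proof (pow2_ge_0 (x (S i) - y (S i))).
    replace ((wval (w i) * x (S i) - wval (w i) * y (S i)) ^ 2) with (wval (w i) ^ 2 * (x (S i) - y (S i)) ^ 2) by ring.
    apply Rmult_le_compat_r; auto. nra. }
  rewrite psum_scal in H0. lra.
Qed.

Lemma Bw_l2 w x : in_l2 x -> in_l2 (Bw w x).
Proof.
  intros Hx. 
  assert (H0 : in_l2 z0) by apply l2_z0.
  destruct (series_bound (D (Bw w x) (Bw w z0)) (4 * l2dist x z0 ^ 2)) as [He _].
  - apply D_nonneg.
  - intros n. eapply Rle_trans; [apply Bw_psum|]. 
    apply Rmult_le_compat_l; [lra|]. apply psum_le_dist2; auto.
  - unfold in_l2. apply (ex_series_ext (D (Bw w x) (Bw w z0)) (fun i => Bw w x i ^ 2)); [|exact He].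
    intros n. unfold D, Bw, z0. rewrite Rmult_0_r, Rminus_0_r; reflexivity.
Qed.

Lemma Bw_dist w x y : in_l2 x -> in_l2 y -> l2dist (Bw w x) (Bw w y) <= 2 * l2dist x y.
Proof.
  intros Hx Hy. apply dist_bound. pose proof (dist_nonneg x y); lra.
  intros n. eapply Rle_trans; [apply Bw_psum|].
  replace ((2 * l2dist x y) ^ 2) with (4 * l2dist x y ^ 2) by ring.
  apply Rmult_le_compat_l; [lra|]. apply psum_le_dist2; auto.
Qed.

Lemma iter_l2 w k x : in_l2 x -> in_l2 (Nat.iter k (Bw w) x).
Proof. intros Hx; induction k; simpl; auto. apply Bw_l2; auto. Qed.

Lemma iter_dist w k x y : in_l2 x -> in_l2 y ->
  l2dist (Nat.iter k (Bw w) x) (Nat.iter k (Bw w) y) <= 2 ^ k * l2dist x y.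
Proof.
  intros Hx Hy. induction k.
  - simpl. lra.
  - simpl Nat.iter. eapply Rle_trans; [apply Bw_dist; apply iter_l2; auto|].
    simpl pow. lra.
Qed.

Fixpoint prodw (w : weight) (i k : nat) : R :=
  match k with O => 1 | S k' => wval (w i) * prodw w (S i) k' end.

Lemma iter_formula w k : forall x i, Nat.iter k (Bw w) x i = prodw w i k * x (i + k)%nat.
Proof.
  induction k; intros x i.
  - simpl. rewrite Nat.add_0_r. ring.
  - simpl Nat.iter. unfold Bw at 1. rewrite IHk. simpl prodw.
    replace (S i + k)%nat with (i + S k)%nat by lia. ring.
Qed.

Lemma prodw_ge1 w k : forall i, 1 <= prodw w i k.
Proof.
  induction k; intros i; simpl; [lra|]. specialize (IHk (S i)). assert (H := wval_bounds (w i)). nra.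
Qed.

Lemma prodw_le w k : forall i, prodw w i k <= 2 ^ k.
Proof.
  induction k; intros i; simpl; [lra|]. specialize (IHk (S i)). assert (H := wval_bounds (w i)).
  assert (H2 := prodw_ge1 w k (S i)). nra.
Qed.

Lemma prodw_add w a b : forall i, prodw w i (a + b) = prodw w i a * prodw w (i + a) b.
Proof.
  induction a; intros i; simpl.
  - rewrite Nat.add_0_r. ring.
  - rewrite IHa. replace (S i + a)%nat with (i + S a)%nat by lia. ring.
Qed.

Lemma prodw_agree v w k : forall i, (forall j, (i <= j < i + k)%nat -> v j = w j) ->
  prodw v i k = prodw w i k.
Proof.
  induction k; intros i H; simpl; auto.
  rewrite (H i) by lia. rewrite (IHk (S i)); auto. intros j Hj; apply H; lia.
Qed.

Definition trunc (N : nat) (z : seqR) : seqR := fun i => if (i <? N)%nat then z i else 0.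

Lemma fs_l2 u N : (forall i, (N <= i)%nat -> u i = 0) -> in_l2 u.
Proof.
  intros H. apply (series_bound _ (psum (fun i => u i ^ 2) N)).
  - intros; apply pow2_ge_0.
  - intros n. apply psum_support. intros; apply pow2_ge_0.
    intros i Hi. rewrite H; auto. ring.
Qed.

Lemma trunc_l2 N z : in_l2 (trunc N z).
Proof.
  apply (fs_l2 _ N). intros i Hi. unfold trunc.
  destruct (Nat.ltb_spec i N); [lia|auto].
Qed.

Lemma psum_mask u N n : psum (fun i => if (i <? N)%nat then 0 else u i) n = psum u n - psum u (Nat.min n N).
Proof.
  induction n; cbn [psum].
  - simpl. lra.
  - rewrite IHn. destruct (Nat.ltb_spec n N).
    + rewrite Nat.min_l by lia. rewrite Nat.min_l by lia. cbn [psum]. lra.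
    + rewrite Nat.min_r by lia. rewrite Nat.min_r by lia. lra.
Qed.

Lemma trunc_tail z eps : in_l2 z -> 0 < eps -> exists N, l2dist (trunc N z) z < eps.
Proof.
  intros Hz He.
  set (u := fun i => z i ^ 2).
  assert (Hu : forall i, 0 <= u i) by (intros; apply pow2_ge_0).
  assert (Hs := Series_correct u Hz).
  assert (Hl : is_lim_seq (sum_n u) (Series u)) by exact Hs.
  apply is_lim_seq_spec in Hl.
  assert (Hpos : 0 < (eps/2)^2) by (apply pow_lt; lra).
  destruct (Hl (mkposreal _ Hpos)) as [N0 HN0]. simpl in HN0.
  specialize (HN0 N0 (le_n _)). rewrite sum_n_psum in HN0.
  exists (S N0).
  apply Rle_lt_trans with (eps/2); [|lra].
  apply dist_bound; [lra|].
  intros n.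
  assert (E: psum (D (trunc (S N0) z) z) n = psum (fun i => if (i <? S N0)%nat then 0 else u i) n).
  { apply psum_ext. intros i. unfold D, trunc, u. destruct (i <? S N0)%nat; ring. }
  rewrite E, psum_mask.
  assert (Hle : forall k, psum u k <= Series u) by (intros; apply psum_le_Series; auto).
  apply Rabs_lt_between in HN0.
  destruct (le_lt_dec n (S N0)).
  - rewrite Nat.min_l by lia. lra.
  - rewrite Nat.min_r by lia. specialize (Hle n). lra.
Qed.

Lemma lim_real u : ex_finite_lim_seq u -> is_lim_seq u (real (Lim_seq u)).
Proof. intros [l Hl]. rewrite (is_lim_seq_unique _ _ Hl). simpl. exact Hl. Qed.

Lemma l2_complete (x : nat -> seqR) (e : nat -> R) :
  (forall m, in_l2 (x m)) ->
  (forall m m', (m <= m')%nat -> l2dist (x m) (x m') <= e m) ->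
  (forall eps, 0 < eps -> exists m, e m < eps) ->
  exists xl, in_l2 xl /\ forall m, l2dist (x m) xl <= e m.
Proof.
  intros Hx He Hlim.
  assert (Hcoord : forall i, ex_finite_lim_seq (fun m => x m i)).
  { intros i. apply ex_lim_seq_cauchy_corr. intros eps.
    destruct (Hlim (eps/2)) as [m0 Hm0]. destruct eps; simpl; lra.
    exists m0. intros n n' Hn Hn'.
    assert (H1 := dist_coord (x m0) (x n) i (Hx m0) (Hx n)).
    assert (H2 := dist_coord (x m0) (x n') i (Hx m0) (Hx n')).
    assert (H3 := He _ _ Hn). assert (H4 := He _ _ Hn').
    replace (x n i - x n' i) with (- (x m0 i - x n i) + (x m0 i - x n' i)) by ring.
    eapply Rle_lt_trans; [apply Rabs_triang|]. rewrite Rabs_Ropp. lra. }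
  set (xl := fun i => real (Lim_seq (fun m => x m i))).
  assert (Hxl : forall i, is_lim_seq (fun m => x m i) (xl i)) by (intros; apply lim_real; auto).
  assert (Hps : forall m n, is_lim_seq (fun m' => psum (D (x m) (x m')) n) (psum (D (x m) xl) n)).
  { intros m n. induction n; cbn [psum].
    - apply is_lim_seq_const.
    - apply (is_lim_seq_plus' _ (fun m' => D (x m) (x m') n)); auto.
      unfold D.
      apply (is_lim_seq_ext (fun m' => (x m n - x m' n) * ((x m n - x m' n) * 1))).
      { intros; simpl; reflexivity. }
      replace ((x m n - xl n) ^ 2) with ((x m n - xl n) * ((x m n - xl n) * 1)) by (simpl; ring).
      assert (Hd : is_lim_seq (fun m' => x m n - x m' n) (x m n - xl n))
        by (apply is_lim_seq_minus'; [apply is_lim_seq_const| apply Hxl]).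
      apply is_lim_seq_mult'; auto.
      apply is_lim_seq_mult'; [exact Hd | apply is_lim_seq_const]. }
  assert (Hb : forall m n, psum (D (x m) xl) n <= e m ^ 2).
  { intros m n. set (E := e m ^ 2).
    assert (HH := is_lim_seq_le_loc (fun m' => psum (D (x m) (x m')) n) (fun _ => E)
                   (psum (D (x m) xl) n) E).
    simpl in HH. apply HH; [| apply Hps | apply is_lim_seq_const].
    exists m. intros m' Hm'.
    apply Rle_trans with (l2dist (x m) (x m') ^ 2). apply psum_le_dist2; auto.
    unfold E. apply pow_incr. split; [apply dist_nonneg| apply He; auto]. }
  assert (Hen : forall m, 0 <= e m).
  { intros m. apply Rle_trans with (l2dist (x m) (x m)); [apply dist_nonneg| apply He; auto]. }
  assert (Hdiff : in_l2 (fun i => x O i - xl i)).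
  { destruct (series_bound (D (x O) xl) (e O ^ 2)) as [HH _]; [apply D_nonneg| apply Hb| exact HH]. }
  exists xl. split.
  - apply (l2_ext (fun i => x O i - (x O i - xl i))). intros; ring.
    apply l2_minus; auto.
  - intros m. apply dist_bound; auto.
Qed.

Definition zrange (B : nat) : list Z :=
  map (fun j => (Z.of_nat j - Z.of_nat B)%Z) (seq 0 (2 * B + 1)).

Fixpoint glist (B : nat) (n : nat) : list (list Z) :=
  match n with
  | O => nil :: nil
  | S k => flat_map (fun z => map (cons z) (glist B k)) (zrange B)
  end.

Definition Grid (n : nat) : list (list Z) := glist (S n * S n) n.

Definition tgt (n : nat) (l : list Z) : seqR := fun i => IZR (nth i l 0%Z) / INR (S n).

Lemma zrange_in B z : (- Z.of_nat B <= z <= Z.of_nat B)%Z -> In z (zrange B).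
Proof.
  intros H. unfold zrange. apply in_map_iff. exists (Z.to_nat (z + Z.of_nat B)).
  split. rewrite Z2Nat.id by lia. lia.
  apply in_seq. lia.
Qed.

Lemma glist_in B n l : length l = n -> (forall z, In z l -> (- Z.of_nat B <= z <= Z.of_nat B)%Z) ->
  In l (glist B n).
Proof.
  revert l. induction n; intros l Hl Hz.
  - destruct l; simpl in *; [auto| lia].
  - destruct l as [|z l]; simpl in Hl; [lia|]. simpl. apply in_flat_map. exists z. split.
    + apply zrange_in. apply Hz. simpl; auto.
    + apply in_map. apply IHn. lia. intros; apply Hz; simpl; auto.
Qed.

Lemma glist_len B n l : In l (glist B n) -> length l = n.
Proof.
  revert l. induction n; intros l H; simpl in H.
  - destruct H as [H|H]; [subst; auto| contradiction].
  - apply in_flat_map in H. destruct H as [z [_ H]]. apply in_map_iff in H.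
    destruct H as [l' [E H]]. subst. simpl. f_equal. auto.
Qed.

Lemma tgt_support n l i : In l (Grid n) -> (n <= i)%nat -> tgt n l i = 0.
Proof.
  intros H Hi. unfold tgt. rewrite nth_overflow. simpl; unfold Rdiv; ring.
  unfold Grid in H. rewrite (glist_len _ _ _ H). auto.
Qed.

Lemma tgt_l2 n l : In l (Grid n) -> in_l2 (tgt n l).
Proof. intros H. apply (fs_l2 _ n). intros; apply tgt_support; auto. Qed.

Lemma grid_dense z eps n0 : in_l2 z -> 0 < eps ->
  exists n, (n0 <= n)%nat /\ exists l, In l (Grid n) /\ l2dist (tgt n l) z + / INR (S n) < eps.
Proof.
  intros Hz He.
  destruct (trunc_tail z (eps/4) Hz) as [N HN]; [lra|].
  set (Dz := l2dist z z0).
  assert (HDz: 0 <= Dz) by apply dist_nonneg.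
  assert (Hzi : forall i, Rabs (z i) <= Dz).
  { intros i. assert (H := dist_coord z z0 i Hz l2_z0). unfold z0 in H. rewrite Rminus_0_r in H. exact H. }
  assert (HN0 := pos_INR N). assert (Hn00 := pos_INR n0).
  destruct (INR_unbounded (4/eps + INR N * 16 / (eps*eps) + Dz + INR n0 + INR N + 1)) as [n Hn].
  assert (H4e : 0 <= 4/eps) by (apply Rlt_le; apply Rdiv_lt_0_compat; lra).
  assert (HNe : 0 <= INR N * 16 / (eps*eps)).
  { unfold Rdiv. apply Rmult_le_pos; [lra|]. apply Rlt_le, Rinv_0_lt_compat. apply Rmult_lt_0_compat; lra. }
  exists n. split. { apply INR_le. lra. }
  assert (HNn : (N <= n)%nat) by (apply INR_le; lra).
  set (q := INR (S n)).
  assert (Hq : q = INR n + 1) by (unfold q; rewrite S_INR; auto).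
  set (g := fun i => if (i <? N)%nat then Int_part (q * z i) else 0%Z).
  set (l := map g (seq 0 n)).
  assert (Hlen : length l = n) by (unfold l; rewrite length_map, length_seq; auto).
  assert (Hnth : forall i, (i < n)%nat -> nth i l 0%Z = g i).
  { intros i Hi. rewrite (nth_indep l (n:=i) 0%Z (g 0%nat)) by lia. unfold l. rewrite map_nth.
    rewrite seq_nth by lia. auto. }
  assert (Hqpos : 1 <= q) by (rewrite Hq; pose proof (pos_INR n); lra).
  assert (Hgbound : forall i, (IZR (g i) <= q * q /\ - (q * q) <= IZR (g i))).
  { intros i. unfold g. destruct (i <? N)%nat.
    - destruct (base_Int_part (q * z i)) as [H1 H2].
      assert (H3 := Hzi i). apply Rabs_le_between in H3.
      assert (q * z i <= q * Dz) by (apply Rmult_le_compat_l; lra).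
      assert (- (q * Dz) <= q * z i) by (replace (- (q * Dz)) with (q * (- Dz)) by ring; apply Rmult_le_compat_l; lra).
      assert (q * Dz + 1 <= q * q).
      { assert (q - Dz >= 1) by lra. assert (q * (q - Dz) >= 1 * 1) by (apply Rle_ge, Rmult_le_compat; lra). nra. }
      lra.
    - simpl. assert (0 <= q * q) by nra. lra. }
  exists l. split.
  - unfold Grid. apply glist_in; auto.
    intros zz Hin. unfold l in Hin. apply in_map_iff in Hin. destruct Hin as [i [Ei Hi]]. subst zz.
    destruct (Hgbound i) as [Hb1 Hb2].
    assert (Eq : q * q = IZR (Z.of_nat (S n * S n))) by (rewrite <- INR_IZR_INZ, mult_INR; auto).
    rewrite Eq in Hb1, Hb2. rewrite <- opp_IZR in Hb2. apply le_IZR in Hb1. apply le_IZR in Hb2. lia.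
  - assert (Htl2 : in_l2 (tgt n l)).
    { apply (fs_l2 _ n). intros i Hi. unfold tgt. rewrite nth_overflow by lia. simpl. unfold Rdiv; ring. }
    assert (Hd1 : l2dist (tgt n l) (trunc N z) <= eps / 4).
    { apply dist_bound; [lra|]. intros m.
      apply Rle_trans with (psum (D (tgt n l) (trunc N z)) N).
      { apply psum_support. apply D_nonneg. intros i Hi. unfold D, trunc, tgt.
        destruct (Nat.ltb_spec i N); [lia|].
        destruct (le_lt_dec n i).
        - rewrite nth_overflow by lia. simpl. unfold Rdiv. ring.
        - rewrite Hnth by auto. unfold g. destruct (Nat.ltb_spec i N); [lia|]. simpl. unfold Rdiv. ring. }
      apply Rle_trans with (INR N * (/ q) ^ 2).
      { apply psum_const_bound. intros i. unfold D, trunc, tgt.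
        destruct (Nat.ltb_spec i N).
        - rewrite Hnth by lia. unfold g. destruct (Nat.ltb_spec i N); [|lia].
          destruct (base_Int_part (q * z i)) as [H1 H2]. fold q.
          set (k := IZR (Int_part (q * z i))) in *.
          replace (k / q - z i) with ((k - q * z i) * / q) by (field; lra).
          rewrite Rpow_mult_distr. 
          assert (0 <= (/ q) ^ 2) by apply pow2_ge_0.
          assert ((k - q * z i) ^ 2 <= 1).
          { assert (0 <= (k - q * z i + 1) * (q * z i - k)) by (apply Rmult_le_pos; lra). simpl. nra. }
          apply (Rmult_le_compat_r ((/ q) ^ 2)) in H4; auto. lra.
        - assert (E0 : nth i l 0%Z = 0%Z).
          { destruct (le_lt_dec n i). rewrite nth_overflow by lia; auto.
            rewrite Hnth by auto. unfold g. destruct (Nat.ltb_spec i N); [lia|auto]. }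
          rewrite E0. fold q. replace ((IZR 0 / q - 0) ^ 2) with 0 by (unfold Rdiv; simpl; ring).
          apply pow2_ge_0. }
      assert (Hiq : 0 < / q) by (apply Rinv_0_lt_compat; lra).
      assert (Hqq : q * / q = 1) by (field; lra).
      assert (q > INR N * 16 / (eps * eps)) by lra.
      assert (INR N <= q * (eps * eps) / 16).
      { assert (INR N * 16 / (eps * eps) * (eps * eps) = INR N * 16) by (field; lra).
        assert (0 < eps * eps) by nra. nra. }
      replace ((eps/4)^2) with (eps * eps / 16) by (simpl; field).
      apply Rle_trans with (q * (eps * eps) / 16 * (/ q)^2).
      { apply Rmult_le_compat_r; [apply pow2_ge_0| lra]. }
      replace (q * (eps * eps) / 16 * (/ q) ^ 2) with ((eps * eps / 16) * (q * / q) * / q) by (simpl; field; lra).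
      rewrite Hqq. 
      assert (/ q <= 1) by (rewrite <- Rinv_1; apply Rinv_le_contravar; lra).
      assert (0 < eps * eps / 16) by (assert (0 < eps * eps) by nra; lra). nra. }
    assert (Hd := dist_tri (tgt n l) (trunc N z) z Htl2 (trunc_l2 N z) Hz).
    assert (Hinv : / q < eps / 4).
    { assert (4 / eps < q) by lra.
      apply Rmult_lt_reg_l with q; [lra|]. rewrite Rinv_r by lra.
      assert (4 / eps * eps = 4) by (field; lra). 
      assert (q * eps > 4) by nra. lra. }
    unfold q in *. lra.
Qed.

Lemma psum_zero u n : (forall i, (i < n)%nat -> u i = 0) -> psum u n = 0.
Proof. induction n; intros H; cbn [psum]; auto. rewrite IHn by (intros; apply H; lia). rewrite H by lia. ring. Qed.

Lemma prod_unbounded w x0 : HC w x0 -> forall M, exists K, M < prodw w 0 K.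
Proof.
  intros [Hx0 Hd] M. apply NNPP. intros Hn.
  assert (Hall : forall K, prodw w 0 K <= M).
  { intros K. apply Rnot_lt_le. intros HK. apply Hn. exists K; auto. }
  set (Dx := l2dist x0 z0).
  assert (HDx : 0 <= Dx) by apply dist_nonneg.
  assert (HM : 1 <= M) by (apply Rle_trans with (prodw w 0 0); [apply prodw_ge1| apply Hall]).
  set (T := M * Dx + 2).
  set (zt := fun i => if (i =? 0)%nat then T else 0).
  assert (Hzt : in_l2 zt).
  { apply (fs_l2 _ 1). intros i Hi. unfold zt. destruct (Nat.eqb_spec i 0); [lia|auto]. }
  destruct (Hd zt 1 Hzt ltac:(lra)) as [k Hk].
  assert (H := dist_coord _ _ 0 (iter_l2 w k x0 Hx0) Hzt).
  rewrite iter_formula in H. replace (zt 0%nat) with T in H by reflexivity. rewrite Nat.add_0_l in H.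
  assert (H1 := dist_coord x0 z0 k Hx0 l2_z0). unfold z0 in H1. rewrite Rminus_0_r in H1. fold Dx in H1.
  assert (Hp := Hall k). assert (Hp1 := prodw_ge1 w k 0).
  assert (Habs : Rabs (prodw w 0 k * x0 k) <= M * Dx).
  { rewrite Rabs_mult. rewrite (Rabs_right (prodw w 0 k)) by lra. apply Rmult_le_compat; auto; try lra. apply Rabs_pos. }
  apply Rabs_le_between in Habs.
  assert (Rabs (prodw w 0 k * x0 k - T) >= 2).
  { rewrite Rabs_left by (unfold T; lra). unfold T. lra. }
  lra.
Qed.

Lemma prod_big w x0 : HC w x0 -> forall M m K0, exists k, (K0 <= k)%nat /\
  forall i, (i < m)%nat -> M < prodw w i k.
Proof.
  intros Hhc M m K0.
  destruct (prod_unbounded w x0 Hhc (M * 2 ^ m)) as [K HK].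
  exists (K + K0)%nat. split; [lia|]. intros i Hi.
  assert (E1 := prodw_add w i (K + K0) 0). simpl in E1.
  assert (E2 := prodw_add w K (i + K0) 0). simpl in E2.
  replace (i + (K + K0))%nat with (K + (i + K0))%nat in E1 by lia. rewrite E2 in E1.
  assert (H1 := prodw_ge1 w (i + K0) K).
  assert (H2 := prodw_le w i 0).
  assert (H3 : 2 ^ i <= 2 ^ m) by (apply Rle_pow; [lra| lia]).
  assert (H4 := prodw_ge1 w (K + K0) i).
  assert (H5 := prodw_ge1 w i 0).
  assert (Hpk := prodw_ge1 w K 0).
  assert (prodw w 0 K <= prodw w 0 K * prodw w K (i + K0)) by nra.
  assert (Hpos : 0 < 2 ^ m) by (apply pow_lt; lra).
  assert (prodw w 0 i * prodw w i (K + K0) <= 2 ^ m * prodw w i (K + K0)) by nra.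
  nra.
Qed.

Lemma cont_N (G : seqR -> Prop) f b : cont_on G f -> G b -> forall N, exists eps, 0 < eps /\
  forall z, G z -> l2dist b z < eps -> forall j, (j < N)%nat -> f z j = f b j.
Proof.
  intros Hc Hb N. induction N.
  - exists 1. split; [lra|]. intros; lia.
  - destruct IHN as [e1 [He1 H1]]. destruct (Hc b Hb N) as [e2 [He2 H2]].
    exists (Rmin e1 e2). split. apply Rmin_pos; auto.
    intros z Hz Hd j Hj.
    assert (Hd1 : l2dist b z < e1) by (eapply Rlt_le_trans; [exact Hd| apply Rmin_l]).
    assert (Hd2 : l2dist b z < e2) by (eapply Rlt_le_trans; [exact Hd| apply Rmin_r]).
    destruct (Nat.eq_dec j N). subst; auto. apply H1; auto; lia.
Qed.

Lemma extend (G : seqR -> Prop) (f : seqR -> weight) :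
  l2_dense G -> cont_on G f -> (forall y, G y -> exists x, HC (f y) x) ->
  forall a rho b sigma (c : seqR) m r,
  G a -> G b -> 0 < rho -> 0 < sigma -> in_l2 c -> (forall i, (m <= i)%nat -> c i = 0) -> 0 < r ->
  exists a' rho' sigma', G a' /\ 0 < rho' /\ 0 < sigma' /\ l2dist a a' + 2 * rho' <= rho /\
    2 * sigma' <= sigma /\
    forall x y, in_l2 x -> l2dist a' x <= rho' -> G y -> l2dist b y <= sigma' ->
      exists k, l2dist (Nat.iter k (Bw (f y)) x) c < r.
Proof.
  intros Hd Hc Hhc a rho b sigma c m r Ga Gb Hrho Hsig Hcl Hcs Hr.
  assert (GL : forall y, G y -> in_l2 y) by apply Hd.
  assert (Hal := GL a Ga).
  destruct (Hhc b Gb) as [x0 Hx0]. set (w := f b) in *.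
  destruct (trunc_tail a (rho/8) Hal) as [K HK]; [lra|].
  set (Dc := l2dist c z0). assert (HDc : 0 <= Dc) by apply dist_nonneg.
  set (M := 8 * (Dc + 1) / rho).
  assert (HM : 0 < M) by (unfold M; apply Rdiv_lt_0_compat; lra).
  assert (HMr : Dc <= rho / 8 * M) by (assert (rho / 8 * M = Dc + 1) by (unfold M; field; lra); lra).
  destruct (prod_big w x0 Hx0 M m K) as [k [HkK Hk]].
  set (d := fun j => if andb (k <=? j)%nat (j <? k + m)%nat then c (j - k)%nat / prodw w (j - k)%nat k else 0).
  set (xs := fun j => trunc K a j + d j).
  assert (Hdl : in_l2 d).
  { apply (fs_l2 _ (k + m)). intros i Hi. unfold d.
    destruct (Nat.ltb_spec i (k + m)); [lia|]. rewrite andb_false_r. auto. }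
  assert (Hxs : in_l2 xs) by (apply l2_plus; [apply trunc_l2| auto]).
  assert (Hdxs : l2dist (trunc K a) xs <= rho / 8).
  { apply dist_bound; [lra|]. intros n.
    assert (E : forall j, D (trunc K a) xs j = (d j) ^ 2) by (intros; unfold D, xs; ring).
    rewrite (psum_ext _ _ _ E).
    apply Rle_trans with (psum (fun j => d j ^ 2) (k + m)).
    { apply psum_support. intros; apply pow2_ge_0. intros i Hi. unfold d.
      destruct (Nat.ltb_spec i (k + m)); [lia|]. rewrite andb_false_r. ring. }
    rewrite psum_add. rewrite psum_zero.
    2:{ intros i Hi. unfold d. destruct (Nat.leb_spec k i); [lia|]. simpl. ring. }
    rewrite Rplus_0_l.
    apply Rle_trans with (psum (fun i => c i ^ 2 / M ^ 2) m).
    { apply psum_le. intros i. unfold d.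
      destruct (Nat.leb_spec k (k + i)); [|lia].
      destruct (Nat.ltb_spec (k + i) (k + m)); cbn [andb].
      - replace (k + i - k)%nat with i by lia.
        assert (Hp : M < prodw w i k) by (apply Hk; lia).
        unfold Rdiv. rewrite Rpow_mult_distr. apply Rmult_le_compat_l; [apply pow2_ge_0|].
        rewrite <- !Rinv_pow by lra. apply Rinv_le_contravar. apply pow_lt; lra.
        apply pow_incr; lra.
      - unfold Rdiv. assert (0 <= c i ^ 2 * / M ^ 2).
        { apply Rmult_le_pos; [apply pow2_ge_0|]. apply Rlt_le, Rinv_0_lt_compat, pow_lt; lra. }
        replace (0 ^ 2) with 0 by ring; lra. }
    unfold Rdiv. rewrite (psum_ext _ (fun i => / M ^ 2 * c i ^ 2)) by (intros; ring).
    rewrite psum_scal. 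
    assert (Hc2 : psum (fun i => c i ^ 2) m <= Dc ^ 2).
    { eapply Rle_trans; [|apply (psum_le_dist2 c z0 m Hcl l2_z0)].
      right. apply psum_ext. intros; unfold D, z0; ring. }
    assert (HMi : 0 < / M ^ 2) by (apply Rinv_0_lt_compat, pow_lt; lra).
    apply Rle_trans with (/ M ^ 2 * Dc ^ 2). apply Rmult_le_compat_l; lra.
    assert (Dc ^ 2 <= (rho / 8) ^ 2 * M ^ 2).
    { rewrite <- Rpow_mult_distr. apply pow_incr; lra. }
    assert (Hmm : / M ^ 2 * M ^ 2 = 1) by (field; lra).
    apply Rmult_le_compat_l with (r := / M ^ 2) in H; [|lra].
    replace (/ M ^ 2 * ((rho / 8) ^ 2 * M ^ 2)) with ((rho / 8) ^ 2 * (/ M ^ 2 * M ^ 2)) in H by ring.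
    rewrite Hmm in H. lra. }
  assert (Haxs : l2dist a xs < rho / 4).
  { assert (H := dist_tri a (trunc K a) xs Hal (trunc_l2 K a) Hxs).
    rewrite (dist_sym a (trunc K a)) in H. lra. }
  set (rho' := Rmin (rho / 8) (r / 2 ^ (k + 2))).
  assert (Hrho' : 0 < rho') by (apply Rmin_pos; [lra| apply Rdiv_lt_0_compat; [lra| apply pow_lt; lra]]).
  destruct (proj2 Hd xs rho' Hxs Hrho') as [a' [Ga' Ha']].
  destruct (cont_N G f b Hc Gb (k + m)) as [eps [Heps Hagree]].
  set (sigma' := Rmin (sigma / 4) (eps / 2)).
  assert (Hsig' : 0 < sigma') by (apply Rmin_pos; lra).
  exists a', rho', sigma'. split; [auto|]. split; [auto|]. split; [auto|]. split.
  { assert (H := dist_tri a xs a' Hal Hxs (GL a' Ga')).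
    assert (rho' <= rho / 8) by apply Rmin_l. lra. }
  split. { assert (sigma' <= sigma / 4) by apply Rmin_l. lra. }
  intros x y Hx Hxa Gy Hyb.
  assert (Hag : forall j, (j < k + m)%nat -> f y j = w j).
  { intros j Hj. apply Hagree; auto. assert (sigma' <= eps / 2) by apply Rmin_r. lra. }
  assert (Hid : Nat.iter k (Bw (f y)) xs = c).
  { apply functional_extensionality. intros i. rewrite iter_formula.
    unfold xs, trunc, d. destruct (Nat.ltb_spec (i + k) K); [lia|].
    destruct (Nat.leb_spec k (i + k)); [|lia]. simpl.
    destruct (Nat.ltb_spec (i + k) (k + m)).
    - replace (i + k - k)%nat with i by lia.
      rewrite (prodw_agree (f y) w k i) by (intros; apply Hag; lia).
      assert (Hpp := prodw_ge1 w k i). field. lra.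
    - rewrite Hcs by lia. ring. }
  exists k. rewrite <- Hid.
  eapply Rle_lt_trans; [apply iter_dist; auto|].
  assert (H1 := dist_tri x a' xs Hx (GL a' Ga') Hxs).
  rewrite (dist_sym x a') in H1.
  assert (H2 : rho' <= r / 2 ^ (k + 2)) by apply Rmin_r.
  assert (H3 : 2 ^ (k + 2) = 2 ^ k * 4) by (rewrite pow_add; simpl; ring).
  assert (H4 : 0 < 2 ^ k) by (apply pow_lt; lra).
  assert (H5 : r / 2 ^ (k + 2) * 2 ^ k = r / 4) by (rewrite H3; field; lra).
  assert (l2dist x xs < 2 * rho').
  { rewrite dist_sym in Ha'. lra. }
  assert (2 ^ k * l2dist x xs <= 2 ^ k * (2 * rho')) by (apply Rmult_le_compat_l; lra).
  assert (2 ^ k * rho' <= 2 ^ k * (r / 2 ^ (k + 2))) by (apply Rmult_le_compat_l; lra).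
  lra.
Qed.

Definition ball := (seqR * R)%type.
Definition cb (b : ball) (x : seqR) : Prop := l2dist (fst b) x <= snd b.
Definition wsub (b' b : ball) : Prop := l2dist (fst b) (fst b') + snd b' <= snd b.
Definition sub (b' b : ball) : Prop := 0 < snd b' /\ l2dist (fst b) (fst b') + 2 * snd b' <= snd b.
Definition disj (b1 b2 : ball) : Prop := snd b1 + snd b2 < l2dist (fst b1) (fst b2).

Definition Req (G : seqR -> Prop) (f : seqR -> weight) (n : nat) (F : nat -> ball) (i j : nat) (l : list Z) : Prop :=
  forall x y, in_l2 x -> cb (F i) x -> G y -> cb (F j) y ->
    exists k, l2dist (Nat.iter k (Bw (f y)) x) (tgt n l) < / INR (S n).

Lemma cb_mono b' b x : in_l2 (fst b) -> in_l2 (fst b') -> in_l2 x -> wsub b' b -> cb b' x -> cb b x.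
Proof.
  unfold cb, wsub. intros H1 H2 H3 H4 H5. assert (H := dist_tri _ _ _ H1 H2 H3). lra.
Qed.

Lemma wsub_refl b : wsub b b.
Proof. unfold wsub. rewrite dist_self. lra. Qed.

Lemma wsub_trans b'' b' b : in_l2 (fst b) -> in_l2 (fst b') -> in_l2 (fst b'') ->
  wsub b'' b' -> wsub b' b -> wsub b'' b.
Proof. unfold wsub. intros H1 H2 H3 H4 H5. assert (H := dist_tri _ _ _ H1 H2 H3). lra. Qed.

Lemma sub_wsub b' b : sub b' b -> wsub b' b.
Proof. unfold sub, wsub. intros [H1 H2]. lra. Qed.

Lemma sub_wsub_trans b'' b' b : in_l2 (fst b) -> in_l2 (fst b') -> in_l2 (fst b'') ->
  0 < snd b'' -> wsub b'' b' -> sub b' b -> sub b'' b.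
Proof.
  unfold sub, wsub. intros H1 H2 H3 H0 H4 [H5 H6]. split; auto.
  assert (H := dist_tri _ _ _ H1 H2 H3). assert (0 <= l2dist (fst b') (fst b'')) by apply dist_nonneg.
  lra.
Qed.

Lemma sub_trans b'' b' b : in_l2 (fst b) -> in_l2 (fst b') -> in_l2 (fst b'') ->
  sub b'' b' -> sub b' b -> sub b'' b.
Proof.
  intros H1 H2 H3 H4 H5. apply (sub_wsub_trans b'' b' b); auto. apply H4. apply sub_wsub; auto.
Qed.

Lemma disj_mono b1 b2 b1' b2' : in_l2 (fst b1) -> in_l2 (fst b2) -> in_l2 (fst b1') -> in_l2 (fst b2') ->
  wsub b1' b1 -> wsub b2' b2 -> disj b1 b2 -> disj b1' b2'.
Proof.
  unfold wsub, disj. intros H1 H2 H3 H4 H5 H6 H7.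
  assert (Ha := dist_tri (fst b1) (fst b1') (fst b2) H1 H3 H2).
  assert (Hb := dist_tri (fst b1') (fst b2') (fst b2) H3 H4 H2).
  rewrite (dist_sym (fst b2') (fst b2)) in Hb. lra.
Qed.

Lemma disj_ne b1 b2 x y : in_l2 (fst b1) -> in_l2 (fst b2) -> in_l2 x ->
  disj b1 b2 -> cb b1 x -> cb b2 y -> x <> y.
Proof.
  unfold disj, cb. intros H1 H2 H3 H4 H5 H6 E. subst y.
  assert (H := dist_tri _ _ _ H1 H3 H2). rewrite (dist_sym x) in H. lra.
Qed.

Lemma Req_mono G f n F F' i j l :
  (forall y, G y -> in_l2 y) -> G (fst (F i)) -> G (fst (F j)) -> G (fst (F' i)) -> G (fst (F' j)) ->
  wsub (F' i) (F i) -> wsub (F' j) (F j) -> Req G f n F i j l -> Req G f n F' i j l.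
Proof.
  intros GL H1 H2 H3 H4 H5 H6 H7 x y Hx Hxb Gy Hyb. apply H7; auto.
  - apply (cb_mono (F' i)); auto.
  - apply (cb_mono (F' j)); auto.
Qed.

Definition upd2 (F : nat -> ball) (i : nat) (bi : ball) (j : nat) (bj : ball) : nat -> ball :=
  fun k => if (k =? i)%nat then bi else if (k =? j)%nat then bj else F k.

Lemma refine_all (G : seqR -> Prop) (f : seqR -> weight) :
  l2_dense G -> cont_on G f -> (forall y, G y -> exists x, HC (f y) x) ->
  forall n N (L : list (nat * nat * list Z)),
  (forall i j l, In (i, j, l) L -> (i < N)%nat /\ (j < N)%nat /\ i <> j /\ In l (Grid n)) ->
  forall F, (forall i, (i < N)%nat -> G (fst (F i)) /\ 0 < snd (F i)) ->
  exists F', (forall i, (i < N)%nat -> G (fst (F' i)) /\ 0 < snd (F' i)) /\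
    (forall i, (i < N)%nat -> wsub (F' i) (F i)) /\
    (forall i j l, In (i, j, l) L -> Req G f n F' i j l).
Proof.
  intros Hd Hc Hhc n N L. assert (GL : forall y, G y -> in_l2 y) by apply Hd.
  induction L as [|[[i j] l] L IH]; intros HL F HF.
  - exists F. split; auto. split. intros; apply wsub_refl. intros i j l [].
  - destruct (IH ltac:(intros i' j' l' H; apply HL; simpl; auto) F HF) as [F1 [HF1 [HW1 HR1]]].
    destruct (HL i j l (or_introl eq_refl)) as [Hi [Hj [Hij Hl]]].
    destruct (HF1 i Hi) as [Gi Ri]. destruct (HF1 j Hj) as [Gj Rj].
    destruct (extend G f Hd Hc Hhc (fst (F1 i)) (snd (F1 i)) (fst (F1 j)) (snd (F1 j)) (tgt n l) n (/ INR (S n))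
                Gi Gj Ri Rj (tgt_l2 n l Hl) (fun k Hk => tgt_support n l k Hl Hk))
      as [a' [rho' [sigma' [Ga' [Hr' [Hs' [Hsub1 [Hsub2 Hprop]]]]]]]].
    { apply Rinv_0_lt_compat. apply lt_0_INR. lia. }
    set (F' := upd2 F1 i (a', rho') j (fst (F1 j), sigma')).
    assert (Fi : F' i = (a', rho')) by (unfold F', upd2; rewrite Nat.eqb_refl; auto).
    assert (Fj : F' j = (fst (F1 j), sigma')).
    { unfold F', upd2. destruct (Nat.eqb_spec j i); [lia|]. rewrite Nat.eqb_refl; auto. }
    assert (Fo : forall k, k <> i -> k <> j -> F' k = F1 k).
    { intros k H1 H2. unfold F', upd2. destruct (Nat.eqb_spec k i); [lia|]. destruct (Nat.eqb_spec k j); [lia|]. auto. }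
    assert (HG' : forall k, (k < N)%nat -> G (fst (F' k)) /\ 0 < snd (F' k)).
    { intros k Hk. destruct (Nat.eq_dec k i); [subst; rewrite Fi; simpl; auto|].
      destruct (Nat.eq_dec k j); [subst; rewrite Fj; simpl; auto|]. rewrite Fo; auto. }
    assert (HW' : forall k, (k < N)%nat -> wsub (F' k) (F1 k)).
    { intros k Hk. destruct (Nat.eq_dec k i); [subst; rewrite Fi; unfold wsub; simpl; lra|].
      destruct (Nat.eq_dec k j); [subst; rewrite Fj; unfold wsub; simpl; rewrite dist_self; lra|].
      rewrite Fo; auto. apply wsub_refl. }
    exists F'. split; auto. split.
    + intros k Hk. apply (wsub_trans _ (F1 k)); auto.
      * apply GL, HF; auto. * apply GL, HF1; auto. * apply GL, HG'; auto.
    + intros i' j' l' [E|Hin].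
      * inversion E; subst i' j' l'. intros x y Hx Hxb Gy Hyb.
        rewrite Fi in Hxb. rewrite Fj in Hyb. unfold cb in *; simpl in *. apply Hprop; auto.
      * destruct (HL i' j' l' (or_intror Hin)) as [Hi' [Hj' _]].
        apply (Req_mono G f n F1 F' i' j' l' GL); try apply HF1; try apply HG'; try apply HW'; auto.
Qed.

Lemma split_ball (G U : seqR -> Prop) : l2_dense G -> l2_open U -> (forall y, G y -> U y) ->
  forall b : ball, G (fst b) -> 0 < snd b -> exists b1 b2, sub b1 b /\ sub b2 b /\
   G (fst b1) /\ G (fst b2) /\ disj b1 b2 /\
   (forall x, in_l2 x -> cb b1 x -> U x) /\ (forall x, in_l2 x -> cb b2 x -> U x).
Proof.
  intros Hd HU HGU [c r] Gc Hr. simpl in Gc, Hr.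
  assert (GL : forall y, G y -> in_l2 y) by apply Hd.
  assert (Hc := GL c Gc).
  set (e0 := fun i => if (i =? 0)%nat then r / 4 else 0).
  assert (He0 : in_l2 e0) by (apply (fs_l2 _ 1); intros i Hi; unfold e0; destruct (Nat.eqb_spec i 0); [lia|auto]).
  set (p := fun i => c i + e0 i).
  assert (Hp : in_l2 p) by (apply l2_plus; auto).
  assert (Hcp1 : l2dist c p <= r / 4).
  { apply dist_bound; [lra|]. intros n.
    eapply Rle_trans. apply (psum_support _ 1). apply D_nonneg.
    intros i Hi. unfold D, p, e0. destruct (Nat.eqb_spec i 0); [lia|]. ring.
    simpl. unfold D, p, e0. simpl. lra. }
  assert (Hcp2 : r / 4 <= l2dist c p).
  { assert (H := dist_coord c p 0 Hc Hp). assert (Ep : p 0%nat = c 0%nat + r / 4) by (unfold p, e0; simpl; ring).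
    rewrite Ep in H. replace (c 0%nat - (c 0%nat + r / 4)) with (- (r/4)) in H by ring.
    rewrite Rabs_Ropp, Rabs_right in H by lra. lra. }
  destruct (proj2 Hd p (r / 16) Hp ltac:(lra)) as [y [Gy Hpy]].
  assert (Hy := GL y Gy).
  assert (Hcy1 := dist_tri c p y Hc Hp Hy).
  assert (Hcy2 := dist_tri c y p Hc Hy Hp). rewrite (dist_sym y p) in Hcy2.
  destruct (proj2 HU c (HGU c Gc)) as [ec [Hec Hc']].
  destruct (proj2 HU y (HGU y Gy)) as [ey [Hey Hy']].
  set (dl := Rmin (r / 16) (Rmin (ec / 2) (ey / 2))).
  assert (Hdl : 0 < dl) by (apply Rmin_pos; [lra| apply Rmin_pos; lra]).
  assert (Hdl1 : dl <= r / 16) by apply Rmin_l.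
  assert (Hdl2 : dl <= ec / 2) by (eapply Rle_trans; [apply Rmin_r| apply Rmin_l]).
  assert (Hdl3 : dl <= ey / 2) by (eapply Rle_trans; [apply Rmin_r| apply Rmin_r]).
  exists (c, dl), (y, dl). unfold sub, disj, cb; simpl.
  rewrite dist_self.
  split. split; lra. split. split; lra. split; auto. split; auto. split. lra.
  split; intros x Hx Hxd; [apply Hc'| apply Hy']; auto; lra.
Qed.

Lemma mychoice {I A : Type} (P : I -> A -> Prop) : (forall i, exists a, P i a) -> exists g, forall i, P i (g i).
Proof.
  intros H. exists (fun i => proj1_sig (constructive_indefinite_description _ (H i))).
  intros i. apply (proj2_sig (constructive_indefinite_description _ (H i))).
Qed.

Definition Inv (G : seqR -> Prop) (Us : nat -> seqR -> Prop) (f : seqR -> weight) (n : nat) (F : nat -> ball) : Prop :=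
  (forall i, (i < 2 ^ n)%nat -> G (fst (F i)) /\ 0 < snd (F i) /\ snd (F i) <= (/ 2) ^ n /\
      forall x, in_l2 x -> cb (F i) x -> Us n x) /\
  (forall i j l, (i < 2 ^ n)%nat -> (j < 2 ^ n)%nat -> i <> j -> In l (Grid n) -> Req G f n F i j l).

Definition Step (n : nat) (F F' : nat -> ball) : Prop :=
  (forall k, (k < 2 ^ S n)%nat -> sub (F' k) (F (Nat.div2 k))) /\
  (forall i, (i < 2 ^ n)%nat -> disj (F' (2 * i)%nat) (F' (2 * i + 1)%nat)).

Lemma div2_lt n k : (k < 2 ^ S n)%nat -> (Nat.div2 k < 2 ^ n)%nat.
Proof. intros H. rewrite Nat.pow_succ_r' in H. assert (E := Nat.div2_odd k). destruct (Nat.odd k); simpl in E; lia. Qed.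

Lemma step_ex (G : seqR -> Prop) (f : seqR -> weight) (Us : nat -> seqR -> Prop) :
  l2_dense G -> (forall n, l2_open (Us n)) -> (forall x, G x -> forall n, Us n x) ->
  cont_on G f -> (forall y, G y -> exists x, HC (f y) x) ->
  forall n F, Inv G Us f n F -> exists F', Inv G Us f (S n) F' /\ Step n F F'.
Proof.
  intros Hd HUo HGU Hc Hhc n F [Hinv1 Hinv2].
  assert (GL : forall y, G y -> in_l2 y) by apply Hd.
  set (Pch := fun i (p : ball * ball) => (i < 2 ^ n)%nat -> sub (fst p) (F i) /\ sub (snd p) (F i) /\
     G (fst (fst p)) /\ G (fst (snd p)) /\ disj (fst p) (snd p) /\
     (forall x, in_l2 x -> cb (fst p) x -> Us (S n) x) /\ (forall x, in_l2 x -> cb (snd p) x -> Us (S n) x)).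
  assert (Hex : forall i, exists p, Pch i p).
  { intros i. destruct (lt_dec i (2 ^ n)) as [Hi|Hi].
    - destruct (Hinv1 i Hi) as [Gi [Ri _]].
      destruct (split_ball G (Us (S n)) Hd (HUo (S n)) (fun y Gy => HGU y Gy (S n)) (F i) Gi Ri)
        as [b1 [b2 H]].
      exists (b1, b2). intros _. exact H.
    - exists (F i, F i). intros H; lia. }
  destruct (mychoice Pch Hex) as [g Hg].
  set (F1 := fun k => if Nat.odd k then snd (g (Nat.div2 k)) else fst (g (Nat.div2 k))).
  assert (HF1 : forall k, (k < 2 ^ S n)%nat -> sub (F1 k) (F (Nat.div2 k)) /\ G (fst (F1 k)) /\
            (forall x, in_l2 x -> cb (F1 k) x -> Us (S n) x)).
  { intros k Hk. assert (Hk2 := div2_lt n k Hk).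
    destruct (Hg _ Hk2) as [H1 [H2 [H3 [H4 [H5 [H6 H7]]]]]].
    unfold F1. destruct (Nat.odd k); auto. }
  assert (HF1d : forall i, (i < 2 ^ n)%nat -> disj (F1 (2 * i)%nat) (F1 (2 * i + 1)%nat)).
  { intros i Hi. unfold F1. rewrite Nat.odd_even, Nat.odd_odd, Nat.div2_double.
    replace (2 * i + 1)%nat with (S (2 * i)) by lia. rewrite Nat.div2_succ_double.
    apply (Hg i Hi). }
  set (N := (2 ^ S n)%nat).
  set (L := flat_map (fun i => flat_map (fun j => if Nat.eq_dec i j then nil else
              map (fun l => (i, j, l)) (Grid (S n))) (seq 0 N)) (seq 0 N)).
  assert (HL : forall i j l, In (i, j, l) L -> (i < N)%nat /\ (j < N)%nat /\ i <> j /\ In l (Grid (S n))).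
  { intros i j l H. unfold L in H. apply in_flat_map in H. destruct H as [i' [Hi' H]].
    apply in_flat_map in H. destruct H as [j' [Hj' H]].
    destruct (Nat.eq_dec i' j') as [E|E]; [destruct H|].
    apply in_map_iff in H. destruct H as [l' [El Hl']]. inversion El; subst.
    apply in_seq in Hi'. apply in_seq in Hj'. repeat split; auto; lia. }
  assert (HLc : forall i j l, (i < N)%nat -> (j < N)%nat -> i <> j -> In l (Grid (S n)) -> In (i, j, l) L).
  { intros i j l Hi Hj Hij Hl. unfold L. apply in_flat_map. exists i. split. apply in_seq; lia.
    apply in_flat_map. exists j. split. apply in_seq; lia.
    destruct (Nat.eq_dec i j); [lia|]. apply in_map; auto. }
  destruct (refine_all G f Hd Hc Hhc (S n) N L HL F1) as [F' [HG' [HW' HR']]].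
  { intros i Hi. destruct (HF1 i Hi) as [[Hr _] [HG _]]. auto. }
  assert (Hsub : forall k, (k < N)%nat -> sub (F' k) (F (Nat.div2 k))).
  { intros k Hk. destruct (HF1 k Hk) as [Hs [HG _]]. destruct (HG' k Hk) as [HG2 Hr2].
    apply (sub_wsub_trans _ (F1 k)); auto.
    apply GL, Hinv1, div2_lt; auto. }
  exists F'. split; [split|split].
  - intros k Hk. destruct (HG' k Hk) as [HG2 Hr2]. split; auto. split; auto. split.
    + destruct (Hsub k Hk) as [_ Hs]. assert (Hk2 := div2_lt n k Hk).
      destruct (Hinv1 _ Hk2) as [_ [_ [Hr _]]]. assert (Hd0 := dist_nonneg (fst (F (Nat.div2 k))) (fst (F' k))).
      simpl. lra.
    + intros x Hx Hxb. destruct (HF1 k Hk) as [_ [HG _ ]]. apply (proj2 (proj2 (HF1 k Hk))); auto.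
      apply (cb_mono (F' k)); auto.
  - intros i j l Hi Hj Hij Hl. apply HR'. apply HLc; auto.
  - auto.
  - intros i Hi. 
    assert (Hi1 : (2 * i < N)%nat) by (unfold N; rewrite Nat.pow_succ_r'; lia).
    assert (Hi2 : (2 * i + 1 < N)%nat) by (unfold N; rewrite Nat.pow_succ_r'; lia).
    apply (disj_mono (F1 (2 * i)%nat) (F1 (2 * i + 1)%nat)); auto;
      try (apply GL; apply HF1; auto); try (apply GL; apply HG'; auto).
Qed.

Lemma finite_min N (r : nat -> R) : (forall k, (k < N)%nat -> 0 < r k) ->
  exists d, 0 < d /\ forall k, (k < N)%nat -> d <= r k.
Proof.
  induction N; intros H.
  - exists 1. split; [lra|]. intros; lia.
  - destruct IHN as [d [Hd Hk]]. intros; apply H; lia.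
    exists (Rmin d (r N)). split. apply Rmin_pos; auto.
    intros k Hk'. destruct (Nat.eq_dec k N). subst. apply Rmin_r.
    eapply Rle_trans. apply Rmin_l. apply Hk. lia.
Qed.

Lemma half_small eps : 0 < eps -> exists N, forall n, (N <= n)%nat -> (/ 2) ^ n < eps.
Proof.
  intros He. destruct (pow_lt_1_zero (/ 2)) with eps as [N HN]; auto.
  rewrite Rabs_right; lra.
  exists N. intros n Hn. specialize (HN n Hn). rewrite Rabs_right in HN; auto.
  apply Rle_ge, pow_le. lra.
Qed.

Theorem lemma6 (G : seqR -> Prop) (f : seqR -> weight) :
  l2_dense G -> l2_Gdelta G -> cont_on G f ->
  (forall y, G y -> ~ HC (f y) y) ->
  (forall y, G y -> exists x, HC (f y) x) ->
  (forall U, l2_open U -> (exists u, U u) ->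
     exists y1 y2, U y1 /\ G y1 /\ U y2 /\ G y2 /\ f y1 <> f y2) ->
  exists P : seqR -> Prop,
    l2_perfect P /\ (forall x, P x -> G x) /\
    (forall x, P x -> ~ HC (f x) x) /\
    (forall x y, P x -> P y -> x <> y -> HC (f y) x).
Proof.
  intros Hd [Us [HUo HGUs]] Hc Hnot Hhc _.
  assert (GL : forall y, G y -> in_l2 y) by apply Hd.
  assert (HGU : forall x, G x -> forall n, Us n x) by (intros x Gx; apply HGUs; auto).
  destruct (proj2 Hd z0 1 l2_z0 ltac:(lra)) as [a0 [Ga0 _]].
  destruct (proj2 (HUo 0%nat) a0 (HGU a0 Ga0 0%nat)) as [e0 [He0 HU0]].
  set (F0 := fun _ : nat => (a0, Rmin 1 (e0 / 2))).
  assert (HI0 : Inv G Us f 0 F0).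
  { split.
    - intros i Hi. unfold F0; simpl. split; auto. split. apply Rmin_pos; lra. split. apply Rmin_l.
      intros x Hx Hxb. unfold cb in Hxb; simpl in Hxb. apply HU0; auto.
      assert (Rmin 1 (e0 / 2) <= e0 / 2) by apply Rmin_r. lra.
    - intros i j l Hi Hj Hij. simpl in Hi, Hj. lia. }
  assert (Hsf : forall p : nat * (nat -> ball), exists F', Inv G Us f (fst p) (snd p) ->
            Inv G Us f (S (fst p)) F' /\ Step (fst p) (snd p) F').
  { intros [n F]. simpl. destruct (classic (Inv G Us f n F)) as [H|H].
    - destruct (step_ex G f Us Hd HUo HGU Hc Hhc n F H) as [F' HF']. exists F'; auto.
    - exists F. intros H'; contradiction. }
  destruct (mychoice _ Hsf) as [sf Hsf'].
  set (fam := nat_rect (fun _ => nat -> ball) F0 (fun k Fk => sf (k, Fk))).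
  assert (Efam : forall n, fam (S n) = sf (n, fam n)) by reflexivity.
  assert (HInv : forall n, Inv G Us f n (fam n)).
  { induction n. exact HI0. rewrite Efam. apply (Hsf' (n, fam n)). exact IHn. }
  assert (HStep : forall n, Step n (fam n) (fam (S n))).
  { intros n. rewrite Efam. apply (Hsf' (n, fam n)). apply HInv. }
  assert (Hcen : forall n i, (i < 2 ^ n)%nat -> G (fst (fam n i))) by (intros n i Hi; apply (HInv n), Hi).
  assert (Hcl2 : forall n i, (i < 2 ^ n)%nat -> in_l2 (fst (fam n i))) by (intros; apply GL, Hcen; auto).
  assert (Hrad : forall n i, (i < 2 ^ n)%nat -> 0 < snd (fam n i) /\ snd (fam n i) <= (/ 2) ^ n)
    by (intros n i Hi; destruct (proj1 (HInv n) i Hi) as [_ [H1 [H2 _]]]; auto).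
  assert (Hpar : forall n k, (k < 2 ^ S n)%nat -> sub (fam (S n) k) (fam n (Nat.div2 k)))
    by (intros; apply HStep; auto).
  assert (Hanc : forall n i x, (i < 2 ^ n)%nat -> in_l2 x -> cb (fam n i) x ->
             forall m, (m <= n)%nat -> exists j, (j < 2 ^ m)%nat /\ cb (fam m j) x).
  { induction n; intros i x Hi Hx Hxb m Hm.
    - assert (m = 0%nat) by lia. subst. exists i. auto.
    - destruct (Nat.eq_dec m (S n)). subst. exists i. auto.
      assert (Hi2 := div2_lt n i Hi).
      apply (IHn (Nat.div2 i)); auto; [|lia].
      apply (cb_mono (fam (S n) i)); auto. apply sub_wsub. auto. }
  set (P := fun x => in_l2 x /\ forall n, exists i, (i < 2 ^ n)%nat /\ cb (fam n i) x).
  assert (Hchain : forall n i, (i < 2 ^ n)%nat -> exists x, P x /\ cb (fam n i) x).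
  { intros n i Hi.
    set (ch := fun m => fam (n + m)%nat (i * 2 ^ m)%nat).
    assert (Hchi : forall m, (i * 2 ^ m < 2 ^ (n + m))%nat).
    { intros m. rewrite Nat.pow_add_r. apply Nat.mul_lt_mono_pos_r; auto. apply Nat.neq_0_lt_0, Nat.pow_nonzero. lia. }
    assert (Hstep1 : forall m, wsub (ch (S m)) (ch m)).
    { intros m. unfold ch. replace (n + S m)%nat with (S (n + m)) by lia.
      assert (E : Nat.div2 (i * 2 ^ S m) = (i * 2 ^ m)%nat).
      { rewrite Nat.pow_succ_r'. replace (i * (2 * 2 ^ m))%nat with (2 * (i * 2 ^ m))%nat by lia.
        apply Nat.div2_double. }
      rewrite <- E. apply sub_wsub. apply Hpar.
      replace (S (n + m)) with (n + S m)%nat by lia. apply Hchi. }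
    assert (Hw : forall m d, wsub (ch (m + d)%nat) (ch m)).
    { intros m d. induction d. rewrite Nat.add_0_r. apply wsub_refl.
      replace (m + S d)%nat with (S (m + d)) by lia.
      apply (wsub_trans _ (ch (m + d)%nat)); auto; unfold ch; apply Hcl2; apply Hchi. }
    destruct (l2_complete (fun m => fst (ch m)) (fun m => snd (ch m))) as [xl [Hxl Hxld]].
    - intros m. unfold ch. apply Hcl2, Hchi.
    - intros m m' Hmm. replace m' with (m + (m' - m))%nat by lia.
      assert (H := Hw m (m' - m)%nat). unfold wsub in H.
      assert (0 < snd (ch (m + (m' - m))%nat)) by (unfold ch; apply Hrad, Hchi). lra.
    - intros eps Heps. destruct (half_small eps Heps) as [N HN]. exists N.
      eapply Rle_lt_trans. apply (Hrad _ _ (Hchi N)). apply HN. lia.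
    - assert (HP : P xl).
      { split; auto. intros L.
        apply (Hanc (n + L)%nat (i * 2 ^ L)%nat xl (Hchi L) Hxl (Hxld L)). lia. }
      exists xl. split; auto. assert (H := Hxld 0%nat). unfold ch in H.
      rewrite Nat.add_0_r, Nat.pow_0_r, Nat.mul_1_r in H. exact H. }
  exists P. split; [|split; [|split]].
  -
    split; [split|split].
    + intros x [Hx _]; auto.
    + intros x Hx Hlim. split; auto. intros n.
      destruct (finite_min (2 ^ S n) (fun k => snd (fam (S n) k))) as [dl [Hdl Hdlk]].
      { intros k Hk. apply Hrad; auto. }
      destruct (Hlim dl Hdl) as [y [[Hy HPy] Hxy]].
      destruct (HPy (S n)) as [k [Hk Hyk]].
      exists (Nat.div2 k). split. apply div2_lt; auto.
      destruct (Hpar n k Hk) as [_ Hs].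
      assert (Hk2 := div2_lt n k Hk).
      assert (T1 := dist_tri (fst (fam n (Nat.div2 k))) (fst (fam (S n) k)) x (Hcl2 _ _ Hk2) (Hcl2 _ _ Hk) Hx).
      assert (T2 := dist_tri (fst (fam (S n) k)) y x (Hcl2 _ _ Hk) Hy Hx).
      rewrite dist_sym in Hxy. specialize (Hdlk k Hk). unfold cb in *. lra.
    + destruct (Hchain 0%nat 0%nat) as [x [Hx _]]. simpl; lia. exists x; auto.
    + intros x [Hx HPx] eps Heps.
      destruct (half_small (eps / 2)) as [N HN]; [lra|].
      destruct (HPx (S N)) as [k [Hk Hxk]].
      set (i := Nat.div2 k).
      assert (Hi : (i < 2 ^ N)%nat) by (apply div2_lt; auto).
      assert (Ek := Nat.div2_odd k). fold i in Ek.
      assert (Hdisj := proj2 (HStep N) i Hi).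
      assert (H2i : (2 * i < 2 ^ S N)%nat) by (rewrite Nat.pow_succ_r'; lia).
      assert (H2i1 : (2 * i + 1 < 2 ^ S N)%nat) by (rewrite Nat.pow_succ_r'; lia).
      set (k' := if Nat.odd k then (2 * i)%nat else (2 * i + 1)%nat).
      assert (Hk' : (k' < 2 ^ S N)%nat) by (unfold k'; destruct (Nat.odd k); auto).
      assert (Ei' : Nat.div2 k' = i).
      { unfold k'. destruct (Nat.odd k). apply Nat.div2_double.
        replace (2 * i + 1)%nat with (S (2 * i)) by lia. apply Nat.div2_succ_double. }
      destruct (Hchain (S N) k' Hk') as [y [[Hy HPy] Hyk]].
      exists y. split. split; auto. split.
      * unfold k' in Hyk. destruct (Nat.odd k) eqn:Eo; simpl in Ek.
        -- rewrite Ek in Hxk. 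
           apply (disj_ne (fam (S N) (2 * i)%nat) (fam (S N) (2 * i + 1)%nat)); auto.
        -- rewrite Nat.add_0_r in Ek. rewrite Ek in Hxk. intros E. subst y.
           apply (disj_ne (fam (S N) (2 * i)%nat) (fam (S N) (2 * i + 1)%nat) x x); auto.
      * assert (Hxi : cb (fam N i) x).
        { apply (cb_mono (fam (S N) k)); auto. apply sub_wsub. apply Hpar; auto. }
        assert (Hyi : cb (fam N i) y).
        { apply (cb_mono (fam (S N) k')); auto. apply sub_wsub. rewrite <- Ei'. apply Hpar; auto. }
        assert (T := dist_tri x (fst (fam N i)) y Hx (Hcl2 _ _ Hi) Hy).
        rewrite (dist_sym x (fst _)) in T. unfold cb in *.
        assert (Hr := proj2 (Hrad N i Hi)). specialize (HN N (le_n _)). lra.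
  - intros x [Hx HPx]. apply HGUs. intros n. destruct (HPx n) as [i [Hi Hxi]].
    apply (proj1 (HInv n) i Hi); auto.
  - intros x [Hx HPx]. apply Hnot. apply HGUs. intros n. destruct (HPx n) as [i [Hi Hxi]].
    apply (proj1 (HInv n) i Hi); auto.
  - intros x y [Hx HPx] [Hy HPy] Hxy.
    assert (Gy : G y).
    { apply HGUs. intros n. destruct (HPy n) as [i [Hi Hyi]]. apply (proj1 (HInv n) i Hi); auto. }
    assert (Hpos : 0 < l2dist x y).
    { destruct (Rle_lt_or_eq_dec 0 (l2dist x y) (dist_nonneg x y)); auto.
      exfalso. apply Hxy. apply dist_eq0; auto. }
    destruct (half_small (l2dist x y / 2)) as [N0 HN0]; [lra|].
    split; auto. intros z eps Hz Heps.
    destruct (grid_dense z eps N0 Hz Heps) as [n [Hn [l [Hl Hlz]]]].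
    destruct (HPx n) as [i [Hi Hxi]]. destruct (HPy n) as [j [Hj Hyj]].
    assert (Hij : i <> j).
    { intros E. subst j. specialize (HN0 n Hn).
      assert (T := dist_tri x (fst (fam n i)) y Hx (Hcl2 _ _ Hi) Hy).
      rewrite (dist_sym x (fst _)) in T. unfold cb in *. assert (Hr := proj2 (Hrad n i Hi)). lra. }
    destruct (proj2 (HInv n) i j l Hi Hj Hij Hl x y Hx Hxi Gy Hyj) as [k Hk].
    exists k.
    assert (T := dist_tri (Nat.iter k (Bw (f y)) x) (tgt n l) z (iter_l2 _ _ _ Hx) (tgt_l2 n l Hl) Hz).
    lra.
Qed.
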